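(* For every $n\geq0$, the dimension of the $n$th graded component of the quotient $\mathbf{ASM}/\mathcal{I}_{\operatorname{io}}$ is $\left\lfloor\frac{(n-1)^2}{4}\right\rfloor+1$.
   Context: An ASM of size $n$ is an $n\times n$ matrix over $\{0,1,-1\}$ whose nonzero entries in every row and column alternate in sign, starting and ending with $+1$; $\operatorname{io}(\delta)$ is the number of entries equal to $-1$ in $\delta$. $\mathbf{ASM}$ is the graded vector space (over $\mathbb{K}$ of characteristic zero) with basis $(\mathbf{F}_{M^\delta})$ indexed by ASMs $\delta$, the degree of $\mathbf{F}_{M^\delta}$ being the size of $\delta$. $\mathcal{I}_{\operatorname{io}}$ is the subspace spanned by all $\mathbf{F}_{M^{\delta_1}}-\mathbf{F}_{M^{\delta_2}}$ with $\delta_1,\delta_2$ ASMs of the same size satisfying $\operatorname{io}(\delta_1)=\operatorname{io}(\delta_2)$; the quotient is graded by size. *)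

(* Defs.v *)
From HB Require Import structures.
From mathcomp Require Import all_boot all_order all_algebra.
Set Implicit Arguments. Unset Strict Implicit. Unset Printing Implicit Defensive.
Import Order.TTheory GRing.Theory Num.Theory.

(* Entries in {0, 1, -1}: None = 0, Some true = +1, Some false = -1. *)
Definition entry := option bool.
Definition entry_val (e : entry) : int :=
  match e with None => 0%R | Some true => 1%R | Some false => (-1)%R end.

Definition alternating (s : seq int) : bool :=
  let t := [seq x <- s | x != 0%R] in
  (t == [seq ((-1) ^+ k)%R | k <- iota 0 (size t)]) && odd (size t).

Definition is_asm n (A : 'M[entry]_n) : bool :=
  [forall i : 'I_n, alternating [seq entry_val (A i j) | j <- enum 'I_n]] &&
  [forall j : 'I_n, alternating [seq entry_val (A i j) | i <- enum 'I_n]].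

Definition ASM n : finType := {A : 'M[entry]_n | is_asm A}.

Definition io n (d : ASM n) : nat :=
  #|[set ij : 'I_n * 'I_n | entry_val (val d ij.1 ij.2) == (-1)%R]|.

Definition ASMn (K : fieldType) n : vectType K := {ffun ASM n -> K^o}.

Definition F_M (K : fieldType) n (d : ASM n) : ASMn K n :=
  [ffun x => ((x == d)%:R)%R].

Definition I_io (K : fieldType) n : {vspace ASMn K n} :=
  <<[seq (F_M K d1 - F_M K d2)%R | d1 <- enum (ASM n), d2 <- [seq d <- enum (ASM n) | io d == io d1]]>>%VS.

Definition quot_dim (K : fieldType) n : nat :=
  (\dim (fullv : {vspace ASMn K n}) - \dim (I_io K n))%N.

(* Main.v *)
Require Import Defs.
From HB Require Import structures.
From mathcomp Require Import all_boot all_order all_algebra zify.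
From Stdlib Require Import Setoid.
Set Implicit Arguments. Unset Strict Implicit. Unset Printing Implicit Defensive.
Import Order.TTheory GRing.Theory Num.Theory.

Module Aux.
Local Open Scope ring_scope.

Definition Pb (b : int) (s : seq int) :=
  forall k, (b + \sum_(x <- take k s) x == 0) || (b + \sum_(x <- take k s) x == 1).

Lemma Pb_cons b x s : Pb b (x :: s) <-> (b == 0) || (b == 1) /\ Pb (b + x) s.
Proof.
split.
  move=> P; split; first by have := P 0%N; rewrite take0 big_nil addr0.
  by move=> k; have := P k.+1; rewrite /= big_cons addrA.
case=> Hb P [|k] /=; first by rewrite big_nil addr0.
by rewrite big_cons addrA.
Qed.

Lemma Pb_b b s : Pb b s -> (b == 0) || (b == 1).
Proof. by move=> /(_ 0%N); rewrite take0 big_nil addr0. Qed.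

Lemma Pb_filter b s : Pb b s <-> Pb b [seq x <- s | x != 0].
Proof.
elim: s b => [//|x s IH] b /=.
case: eqP => [->|nx] /=.
  rewrite Pb_cons addr0 IH; split; first by case.
  by move=> P; split=> //; apply: Pb_b P.
by rewrite !Pb_cons IH.
Qed.

Definition alt0 m : seq int := [seq (-1) ^+ k | k <- iota 0 m].
Definition alt1 m : seq int := [seq (-1) ^+ k.+1 | k <- iota 0 m].

Lemma iota1 m : iota 1 m = map succn (iota 0 m).
Proof. by rewrite -(iotaDl 1 0 m). Qed.

Lemma alt0S m : alt0 m.+1 = 1 :: alt1 m.
Proof. by rewrite /alt0 /alt1 /= expr0 iota1 -map_comp. Qed.

Lemma alt1S m : alt1 m.+1 = -1 :: alt0 m.
Proof.
rewrite /alt0 /alt1 /= expr1 iota1 -map_comp; congr (_ :: _); apply: eq_map => k /=.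
by rewrite !exprS mulrA mulrNN mulr1 mul1r.
Qed.

Lemma Pb_alt t : all (fun x => x != 0) t ->
  (Pb 0 t <-> t = alt0 (size t)) /\ (Pb 1 t <-> t = alt1 (size t)).
Proof.
elim: t => [|x t IH] /=.
  by split; split=> // _ k; rewrite big_nil addr0 eqxx ?orbT.
case/andP=> nx /IH [IH0 IH1]; rewrite alt0S alt1S !Pb_cons.
split; split.
- case=> _; rewrite add0r => P.
  have := Pb_b P; case/orP=> /eqP ex; first by rewrite ex eqxx in nx.
  by subst x; move/IH1: P => <-.
- move=> [-> e]; split=> //; rewrite add0r; exact/IH1.
- case=> _ P.
  have := Pb_b P; case/orP=> /eqP ex.
    have ex' : x = -1 by rewrite -(addKr 1 x) ex addr0.
    by move: P; rewrite ex => /IH0 <-; rewrite ex'.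
  have x0 : x = 0 by rewrite -(addKr 1 x) ex subrr.
  by rewrite x0 eqxx in nx.
- move=> [-> e]; split=> //; rewrite subrr; exact/IH0.
Qed.

Lemma sum_alt m : \sum_(x <- alt0 m) x = (odd m)%:R /\ \sum_(x <- alt1 m) x = - (odd m)%:R.
Proof.
elim: m => [|m [IH0 IH1]]; first by rewrite /alt0 /alt1 /= !big_nil oppr0.
rewrite alt0S alt1S !big_cons IH0 IH1 /=.
by case: (odd m) => /=; split.
Qed.

Lemma alternatingP s : alternating s <-> Pb 0 s /\ \sum_(x <- s) x = 1.
Proof.
rewrite /alternating Pb_filter.
have sE : \sum_(x <- s) x = \sum_(x <- [seq x <- s | x != 0]) x.
  by rewrite big_filter [RHS]big_mkcond; apply: eq_bigr => x _; case: eqP => // ->.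
rewrite sE.
have [Hiff _] := Pb_alt (filter_all (fun x => x != 0) s).
set t := [seq x <- s | x != 0] in Hiff *.
split.
  case/andP => /eqP e o; split; first exact/Hiff.
  by rewrite {1}e (proj1 (sum_alt _)) o.
case=> P s1; apply/andP; split; first exact/eqP/Hiff.
move: s1; rewrite {1}(Hiff.1 P) (proj1 (sum_alt _)).
by case: (odd (size t)) => // /eqP; rewrite eq_sym oner_eq0.
Qed.

Definition blk (c L j : nat) : entry :=
  if (c <= j <= c + L.*2)%N then Some (~~ odd (j - c)) else None.
Definition bv c L j := entry_val (blk c L j).

Lemma bv_in c L k : (k <= L.*2)%N -> bv c L (c + k) = (-1) ^+ k.
Proof.
move=> hk; rewrite /bv /blk leq_addr leq_add2l hk /= addKn.
by rewrite -signr_odd; case: (odd k).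
Qed.

Lemma bv_out c L j : ~~ (c <= j <= c + L.*2)%N -> bv c L j = 0.
Proof. by rewrite /bv /blk => /negbTE ->. Qed.

Lemma iota_split c L n : (c + L.*2 < n)%N ->
  iota 0 n = iota 0 c ++ iota c (L.*2.+1) ++ iota (c + L.*2.+1) (n - (c + L.*2.+1)).
Proof.
move=> h; rewrite -iotaD -iotaD; congr iota; lia.
Qed.

Lemma map_cst (T U : Type) (x : U) (s : seq T) : [seq x | _ <- s] = nseq (size s) x.
Proof. by elim: s => //= a s ->. Qed.

Lemma row_blk c L n : (c + L.*2 < n)%N ->
  [seq bv c L j | j <- iota 0 n] = nseq c 0 ++ alt0 (L.*2.+1) ++ nseq (n - (c + L.*2.+1)) 0.
Proof.
Proof.
move=> h; rewrite (iota_split h) !map_cat.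
have -> : [seq bv c L j | j <- iota 0 c] = [seq 0 | j <- iota 0 c].
  by apply/eq_in_map => j; rewrite mem_iota => /andP[_ hj]; apply: bv_out; lia.
have -> : [seq bv c L j | j <- iota (c + L.*2.+1) (n - (c + L.*2.+1))] =
          [seq 0 | j <- iota (c + L.*2.+1) (n - (c + L.*2.+1))].
  by apply/eq_in_map => j; rewrite mem_iota => /andP[hj _]; apply: bv_out; lia.
rewrite !map_cst !size_iota; congr (_ ++ (_ ++ _)).
rewrite -[in iota c _](addn0 c) iotaDl -map_comp /alt0; apply/eq_in_map => k.
by rewrite mem_iota => /andP[_ hk] /=; apply: bv_in; lia.
Qed.

Arguments alt0 : simpl never.

Lemma alt0_nz m : all (fun x => x != 0) (alt0 m).
Proof. by apply/allP => x /mapP[k _ ->]; rewrite signr_eq0. Qed.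

Lemma alt_blk c L n : (c + L.*2 < n)%N -> alternating [seq bv c L j | j <- iota 0 n].
Proof.
move=> h; rewrite /alternating row_blk // !filter_cat (all_filterP (alt0_nz _)) !filter_nseq eqxx /= cats0.
by rewrite size_map size_iota eqxx /= odd_double.
Qed.

Lemma sum_take_map (G : nat -> int) n k :
  \sum_(x <- take k [seq G i | i <- iota 0 n]) x = \sum_(0 <= i < minn k n) G i.
Proof. by rewrite -map_take take_iota big_map /index_iota subn0. Qed.

Lemma sum_map_iota (G : nat -> int) n :
  \sum_(x <- [seq G i | i <- iota 0 n]) x = \sum_(0 <= i < n) G i.
Proof. by rewrite big_map /index_iota subn0. Qed.

Lemma alt_diff (b : nat -> bool) n : b 0%N = false -> b n = true ->
  alternating [seq ((b i.+1 : nat)%:Z - (b i : nat)%:Z) | i <- iota 0 n].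
Proof.
move=> b0 bn; apply/alternatingP; split.
  move=> k; rewrite sum_take_map (telescope_sumr (fun i => (b i : nat)%:Z)) // b0 subr0 add0r.
  by case: (b _).
by rewrite sum_map_iota (telescope_sumr (fun i => (b i : nat)%:Z)) // b0 bn.
Qed.

Lemma sum_sign L : (\sum_(0 <= k < L.*2.+1) (((-1) ^+ k == -1 :> int) : nat) = L)%N.
Proof.
elim: L => [|L IH]; first by rewrite big_nat1 expr0.
rewrite doubleS (big_nat_recr (L.*2.+2)) // (big_nat_recr (L.*2.+1)) // IH.
rewrite -[(-1) ^+ L.*2.+1]signr_odd -[(-1) ^+ L.*2.+2]signr_odd /= odd_double /=.
by rewrite addn0 addn1.
Qed.

Lemma cnt_blk c L n : (c + L.*2 < n)%N ->
  (\sum_(0 <= j < n) ((bv c L j == (-1)%R) : nat) = L)%N.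
Proof.
move=> h; rewrite {1}/index_iota subn0 (iota_split h) !big_cat.
have -> : (\sum_(j <- iota 0 c) ((bv c L j == (-1)%R) : nat) = 0)%N.
  by rewrite big1_seq // => j /andP[_]; rewrite mem_iota => /andP[_ hj]; rewrite bv_out //; lia.
have -> : (\sum_(j <- iota (c + L.*2.+1) (n - (c + L.*2.+1))) ((bv c L j == (-1)%R) : nat) = 0)%N.
  by rewrite big1_seq // => j /andP[_]; rewrite mem_iota => /andP[hj _]; rewrite bv_out //; lia.
have -> : (\sum_(j <- iota c L.*2.+1) ((bv c L j == (-1)%R) : nat) =
           \sum_(0 <= k < L.*2.+1) (((-1) ^+ k == -1 :> int) : nat))%N.
  rewrite -[in iota c _](addn0 c) iotaDl big_map /index_iota subn0 !big_seq.
  by apply: eq_bigr => k; rewrite mem_iota => /andP[_ hk]; rewrite bv_in //; lia.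
by rewrite sum_sign /= add0n addn0.
Qed.

Definition AP (c L j : nat) : bool := (c <= j)%N && (j < c + L.*2)%N && ~~ odd (j - c).

Ltac atomcase :=
  repeat match goal with
  | |- context[odd ?x] => let E := fresh "E" in case E: (odd x)
  | |- context[(?x <= ?y)%N] => let E := fresh "E" in case E: (x <= y)%N
  end.

Lemma AP_heavy a L j : bv a L j = (AP a L.+1 j : nat)%:Z - (AP a.+1 L j : nat)%:Z.
Proof.
rewrite /bv /blk /AP; atomcase => //=; lia.
Qed.

Lemma AP_light a L j : bv (a + L.*2) 0 j = (AP a L.+1 j : nat)%:Z - (AP a L j : nat)%:Z.
Proof.
rewrite /bv /blk /AP; atomcase => //=; lia.
Qed.

Section Constr.
Variables (n : nat) (h : nat -> bool).
Definition pp := (n.+1)./2.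
Definition aa i := (\sum_(i <= k < pp) h k)%N.
Definition bb i := (1 + \sum_(pp <= k < i) h k)%N.
Definition ff i j := if (i <= pp)%N then AP (aa i) i j else ~~ AP (bb i) (n - i) j.
Definition ww i := minn i (n.-1 - i).
Definition LL i := (h i * ww i)%N.
Definition cc i := if (i < pp)%N then (aa i.+1 + (~~ h i) * i.*2)%N
                   else (bb i + (~~ h i) * (n.-1 - i).*2)%N.

Lemma aa_rec i : (i < pp)%N -> aa i = (h i + aa i.+1)%N.
Proof. by move=> hi; rewrite /aa big_ltn. Qed.

Lemma bb_rec i : (pp <= i)%N -> bb i.+1 = (bb i + h i)%N.
Proof. by move=> hi; rewrite /bb big_nat_recr //= addnA. Qed.

Lemma aa_le i : (aa i <= pp - i)%N.
Proof.
rewrite /aa; apply: leq_trans (_ : \sum_(i <= k < pp) 1 <= _)%N.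
  by apply: leq_sum => k _; case: (h k).
by rewrite sum_nat_const_nat muln1.
Qed.

Lemma bb_le i : (bb i <= 1 + (i - pp))%N.
Proof.
rewrite /bb leq_add2l; apply: leq_trans (_ : \sum_(pp <= k < i) 1 <= _)%N.
  by apply: leq_sum => k _; case: (h k).
by rewrite sum_nat_const_nat muln1.
Qed.

Lemma aa_pp : aa pp = 0%N.
Proof. by rewrite /aa big_geq. Qed.

Lemma bb_pp : bb pp = 1%N.
Proof. by rewrite /bb big_geq. Qed.

Lemma ff0 j : ff 0 j = false.
Proof. by rewrite /ff leq0n /AP addn0; case: leqP. Qed.

Lemma ffn j : (j < n)%N -> ff n j = true.
Proof.
move=> hj; rewrite /ff; case: leqP => hn.
  have n1 : n = 1%N by move: hn; rewrite /pp; lia.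
  have p1 : pp = 1%N by rewrite /pp n1.
  have j0 : j = 0%N by lia.
  have a1 : aa 1 = 0%N by rewrite -p1 aa_pp.
  by rewrite j0 n1 /AP a1.
by rewrite subnn /AP addn0; case: leqP.
Qed.

Lemma ff_ge i j : (pp <= i)%N -> (j < n)%N -> ff i j = ~~ AP (bb i) (n - i) j.
Proof.
move=> hi hj; rewrite /ff; case: leqP => hi2; last by [].
have ip : i = pp by apply/eqP; rewrite eqn_leq hi2 hi.
rewrite ip aa_pp bb_pp /AP /pp; move: hj; rewrite /pp; atomcase => //=; lia.
Qed.

Lemma key i j : (i < n)%N -> (j < n)%N ->
  bv (cc i) (LL i) j = (ff i.+1 j : nat)%:Z - (ff i j : nat)%:Z.
Proof.
move=> hi hj; rewrite /cc /LL; case: ltnP => hp.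
  rewrite /ff hp ltnW // (aa_rec hp).
  case: (h i) => /=.
    rewrite mul0n addn0 mul1n (_ : ww i = i); last by rewrite /ww /pp in hp *; lia.
    by rewrite add1n AP_heavy.
  by rewrite mul1n mul0n add0n AP_light.
rewrite (ff_ge hp hj) (ff_ge (leqW hp) hj) (bb_rec hp).
have -> : (n - i = (n.-1 - i).+1)%N by lia.
have -> : (n - i.+1 = (n.-1 - i))%N by lia.
case: (h i) => /=.
  rewrite mul0n addn0 mul1n (_ : ww i = n.-1 - i)%N; last by rewrite /ww /pp in hp *; lia.
  rewrite addn1 AP_heavy.
  by case: (AP _ _ _); case: (AP _ _ _) => /=; lia.
rewrite mul1n mul0n addn0 AP_light.
by case: (AP _ _ _); case: (AP _ _ _) => /=; lia.
Qed.

Lemma cc_bound i : (i < n)%N -> (cc i + (LL i).*2 < n)%N.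
Proof.
move=> hi; have := aa_le i.+1; have := bb_le i.
have hpp : pp = (n.+1)./2 by [].
rewrite /cc /LL /ww; case: (h i) => /=; case: (ltnP i pp) => ? /=; lia.
Qed.
End Constr.

Lemma io_sum n (d : ASM n) :
  io d = (\sum_(i < n) \sum_(j < n) ((entry_val (val d i j) == (-1)%R) : nat))%N.
Proof.
rewrite /io -sum1_card.
rewrite (eq_bigl (fun p : 'I_n * 'I_n => true && (entry_val (val d p.1 p.2) == -1)));
  last by move=> p; rewrite inE.
rewrite -(pair_big_dep xpredT (fun i j => entry_val (val d i j) == -1) (fun _ _ => 1%N)) /=.
by apply: eq_bigr => i _; rewrite big_mkcond /=; apply: eq_bigr => j _; case: ifP.
Qed.

Lemma map_enum_ord (T : Type) n (F : nat -> T) :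
  [seq F (val i) | i <- enum 'I_n] = [seq F i | i <- iota 0 n].
Proof. by rewrite -val_enum_ord -map_comp. Qed.

Section Build.
Variables (n : nat) (h : nat -> bool).

Definition Mat : 'M[entry]_n := \matrix_(i < n, j < n) blk (cc n h i) (LL n h i) j.

Lemma Mat_asm : is_asm Mat.
Proof.
apply/andP; split; apply/forallP => k.
  rewrite (eq_map (g := fun j : 'I_n => bv (cc n h k) (LL n h k) (val j))); last by move=> j; rewrite mxE.
  by rewrite map_enum_ord; apply: alt_blk; apply: cc_bound.
rewrite (eq_map (g := fun i : 'I_n => bv (cc n h (val i)) (LL n h (val i)) k)); last by move=> i; rewrite mxE.
rewrite (map_enum_ord _ (fun i => bv (cc n h i) (LL n h i) k)).
have -> : [seq bv (cc n h i) (LL n h i) k | i <- iota 0 n] =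
          [seq ((ff n h i.+1 k : nat)%:Z - (ff n h i k : nat)%:Z) | i <- iota 0 n].
  by apply/eq_in_map => i; rewrite mem_iota => /andP[_ hi] /=; rewrite key.
by apply: alt_diff; [exact: ff0 | exact: ffn].
Qed.

Definition MatA : ASM n := exist _ Mat Mat_asm.

Lemma io_MatA : io MatA = (\sum_(i < n) h i * ww n i)%N.
Proof.
rewrite io_sum; apply: eq_bigr => i _.
have := cnt_blk (cc_bound h (ltn_ord i)); rewrite big_mkord /LL => <-.
by apply: eq_bigr => j _; rewrite /= mxE.
Qed.
End Build.

Lemma Posz_sum m (F : nat -> nat) : ((\sum_(0 <= i < m) F i)%N : int) = \sum_(0 <= i < m) (F i : int).
Proof.
elim: m => [|m IH]; first by rewrite !big_geq.
by rewrite !big_nat_recr //= PoszD IH.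
Qed.

Section UB.
Variables (n : nat) (d : ASM n).

Definition E (i j : nat) : int :=
  if (insub i : option 'I_n) is Some i' then
    (if (insub j : option 'I_n) is Some j' then entry_val (val d i' j') else 0) else 0.

Lemma E_val (i j : 'I_n) : E i j = entry_val (val d i j).
Proof. by rewrite /E !valK. Qed.

Lemma row_alt i : (i < n)%N -> alternating [seq E i j | j <- iota 0 n].
Proof.
move=> hi; have := (andP (valP d)).1 => /forallP /(_ (Ordinal hi)).
rewrite (eq_map (g := fun j : 'I_n => E i (val j))); last by move=> j; rewrite -E_val.
by rewrite (map_enum_ord _ (E i)).
Qed.

Lemma col_alt j : (j < n)%N -> alternating [seq E i j | i <- iota 0 n].
Proof.
move=> hj; have := (andP (valP d)).2 => /forallP /(_ (Ordinal hj)).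
rewrite (eq_map (g := fun i : 'I_n => E (val i) j)); last by move=> i; rewrite -E_val.
by rewrite (map_enum_ord _ (fun i => E i j)).
Qed.

Lemma row_sum i : (i < n)%N -> \sum_(0 <= j < n) E i j = 1.
Proof. by move=> /row_alt /alternatingP [_]; rewrite sum_map_iota. Qed.

Definition c k j := \sum_(0 <= i < k) E i j.

Lemma c01 k j : (k <= n)%N -> (j < n)%N -> (c k j == 0) || (c k j == 1).
Proof.
move=> hk /col_alt /alternatingP [P _]; have := P k.
by rewrite add0r sum_take_map (minn_idPl hk).
Qed.

Lemma cS k j : c k.+1 j = c k j + E k j.
Proof. by rewrite /c big_nat_recr. Qed.

Lemma sum_c k : (k <= n)%N -> \sum_(0 <= j < n) c k j = k%:Z.
Proof.
move=> hk; rewrite /c exchange_big_nat.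
rewrite (eq_big_nat _ _ (F2 := fun _ => 1)); last by move=> i /andP[_ hi]; apply: row_sum; lia.
by rewrite sumr_const_nat subn0 natz.
Qed.

Definition r i := (\sum_(0 <= j < n) ((E i j == (-1)%R) : nat))%N.

Lemma r_le i : (i < n)%N -> (r i <= ww n i)%N.
Proof.
move=> hi.
have pt : forall j, (j < n)%N ->
   (((E i j == -1) : nat) : int) <= c i j /\ (((E i j == -1) : nat) : int) <= 1 - c i.+1 j.
  move=> j hj; have := c01 (ltnW hi) hj; have := c01 hi hj; rewrite cS.
  have [->|ne] := eqVneq (E i j) (-1); rewrite ?(negbTE ne) /=; lia.
have h1 : (r i : int) <= i%:Z.
  rewrite /r Posz_sum -(sum_c (ltnW hi)); apply: ler_sum_nat => j /andP[_ hj].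
  exact: (pt j hj).1.
have h2 : (r i : int) <= (n - i.+1)%N%:Z.
  rewrite /r Posz_sum.
  have -> : ((n - i.+1)%N : int) = \sum_(0 <= j < n) (1 - c i.+1 j).
    by rewrite sumrB sumr_const_nat subn0 sum_c // -natz; lia.
  apply: ler_sum_nat => j /andP[_ hj]; exact: (pt j hj).2.
rewrite /ww; lia.
Qed.

Lemma io_le : (io d <= \sum_(i < n) ww n i)%N.
Proof.
rewrite io_sum; apply: leq_sum => i _.
have -> : (\sum_(j < n) ((entry_val (val d i j) == (-1)%R) : nat))%N = r i.
  by rewrite /r big_mkord; apply: eq_bigr => j _; rewrite E_val.
exact: r_le.
Qed.
End UB.

Lemma dim_ffunK (K : fieldType) (I : finType) : dim {ffun I -> K^o} = #|I|.
Proof. have -> : dim {ffun I -> K^o} = (#|I| * dim K^o)%N by []. 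
have -> : dim K^o = 1%N by []. by rewrite muln1. Qed.

Section LA.
Variables (K : fieldType) (n N : nat).
Hypothesis hb : forall d : ASM n, (io d < N)%N.
Hypothesis hex : forall k : 'I_N, exists d : ASM n, io d = k.

Definition phi (v : ASMn K n) : {ffun 'I_N -> K^o} :=
  [ffun k : 'I_N => \sum_(d : ASM n | io d == k) v d].

Lemma phi_lin : linear phi.
Proof.
move=> a u v; apply/ffunP=> k; rewrite !ffunE scaler_sumr -big_split /=.
by apply: eq_bigr => d _; rewrite !ffunE.
Qed.

Definition phiL : {linear _ -> _} := HB.pack phi (GRing.isLinear.Build _ _ _ _ phi phi_lin).

Definition fphi : 'Hom(ASMn K n, {ffun 'I_N -> K^o}) := linfun phiL.

Lemma fphiE v : fphi v = phi v.
Proof. by rewrite lfunE. Qed.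

Lemma phiF d : phi (F_M K d) = [ffun k : 'I_N => ((io d == k)%:R : K)].
Proof.
apply/ffunP=> k; rewrite !ffunE.
rewrite (eq_bigr (fun d' => ((d' == d)%:R : K))); last by move=> d' _; rewrite ffunE.
case: eqP => [<-|ne].
  rewrite (bigD1 d) //= eqxx big1 ?addr0 // => d' /andP[_ /negbTE ->] //.
by rewrite big1 // => d' /eqP e; case: eqP => // ed; case: ne; rewrite -ed.
Qed.

Lemma I_io_ker : (I_io K n <= lker fphi)%VS.
Proof.
apply/span_subvP => v /allpairsPdep [d1 [d2 [_ ]]].
rewrite mem_filter => /andP[/eqP e _] ->.
by rewrite memv_ker linearB /= !fphiE !phiF e subrr.
Qed.

Definition rep (d : ASM n) : ASM n := odflt d [pick d' : ASM n | io d' == io d].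

Lemma rep_io d : io (rep d) = io d.
Proof. by rewrite /rep; case: pickP => [d' /eqP|] //. Qed.

Lemma rep_eq d1 d2 : io d1 = io d2 -> rep d1 = rep d2.
Proof.
move=> e; rewrite /rep.
have -> : [pick d' : ASM n | io d' == io d1] = [pick d' : ASM n | io d' == io d2].
  by apply: eq_pick => d'; rewrite e.
case: pickP => // /(_ d1); by rewrite e eqxx.
Qed.

Lemma ker_I_io : (lker fphi <= I_io K n)%VS.
Proof.
apply/subvP => v; rewrite memv_ker fphiE => /eqP phi0.
have vE : v = \sum_(d : ASM n) v d *: F_M K d.
  apply/ffunP => x; rewrite sum_ffunE (bigD1 x) //= big1 => [|d ndx].
    by rewrite !ffunE eqxx addr0 [_ *: _]mulr1.
  by rewrite /= !ffunE eq_sym (negbTE ndx) [_ *: _]mulr0.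
have -> : v = \sum_(d : ASM n) v d *: (F_M K d - F_M K (rep d))
              + \sum_(d : ASM n) v d *: F_M K (rep d).
  by rewrite -big_split /=; rewrite {1}vE; apply: eq_bigr => d _; rewrite -scalerDr subrK.
have -> : \sum_(d : ASM n) v d *: F_M K (rep d) = 0.
  apply/ffunP => x; rewrite sum_ffunE ffunE.
  case: (eqVneq (rep x) x) => [rx|nrx].
    have := congr1 (fun f : {ffun 'I_N -> K^o} => f (Ordinal (hb x))) phi0.
    rewrite !ffunE /= => e0; apply: (etrans _ e0).
    rewrite [RHS]big_mkcond; apply: eq_bigr => d _; rewrite /= !ffunE.
    case: (eqVneq (io d) (io x)) => [e|ne].
      by rewrite (rep_eq e) rx eqxx [_ *: _]mulr1.
    case: eqP => [er|]; last by rewrite [_ *: _]mulr0.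
    by case/eqP: ne; rewrite er rep_io.
  rewrite big1 // => d _; rewrite !ffunE.
  case: eqP => [e|]; last by rewrite [_ *: _]mulr0.
  by case/eqP: nrx; rewrite e; apply: rep_eq; rewrite rep_io.
rewrite addr0; apply: memv_suml => d _; apply: memvZ; apply: memv_span.
apply/allpairsPdep; exists d, (rep d); split => //; first by rewrite mem_enum.
by rewrite mem_filter rep_io eqxx mem_enum.
Qed.

Definition ek (k : 'I_N) : {ffun 'I_N -> K^o} := [ffun k' : 'I_N => ((k == k')%:R : K^o)].

Lemma img_full : limg fphi = fullv.
Proof.
apply/eqP; rewrite eqEsubv subvf /=; apply/subvP => w _.
have wE : w = \sum_(k : 'I_N) w k *: ek k.
  apply/ffunP => x; rewrite sum_ffunE (bigD1 x) //= big1 => [|k nkx].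
    by rewrite !ffunE eqxx addr0 [_ *: _]mulr1.
  by rewrite /= !ffunE (negbTE nkx) [_ *: _]mulr0.
rewrite wE; apply: memv_suml => k _; apply: memvZ.
have [d dk] := hex k.
have -> : ek k = fphi (F_M K d).
  by rewrite fphiE phiF; apply/ffunP => k'; rewrite !ffunE dk.
exact: memv_img (memvf _).
Qed.

Lemma quot_dimN : quot_dim K n = N.
Proof.
have := limg_ker_dim fphi fullv.
rewrite capfv img_full.
have -> : lker fphi = I_io K n by apply/eqP; rewrite eqEsubv ker_I_io I_io_ker.
rewrite /quot_dim => <-; rewrite addKn dimvf dim_ffunK card_ord //.
Qed.
End LA.

End Aux.
Import Aux.

Lemma sum_ww_aux n : (\sum_(0 <= i < n) ww n i = (n.-1 * n.-1) %/ 4)%N.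
Proof.
have main : forall m, (\sum_(0 <= i < m) ww m i = (m.-1 * m.-1) %/ 4)%N /\
                      (\sum_(0 <= i < m.+1) ww m.+1 i = (m * m) %/ 4)%N.
  elim=> [|m [IH1 IH2]]; first by split; [rewrite big_geq | rewrite big_nat1].
  split=> //.
  rewrite big_nat_recl // big_nat_recr //=.
  rewrite (eq_big_nat _ _ (F2 := fun i => ww m i + 1)%N); last by move=> i hi; rewrite /ww; lia.
  rewrite big_split /= IH1 sum_nat_const_nat /ww.
  case: m {IH1 IH2} => [|m] //=; nia.
by case: (main n).
Qed.

Lemma sum_ww n : (\sum_(i < n) ww n i = (n - 1) ^ 2 %/ 4)%N.
Proof. by rewrite -(big_mkord xpredT (ww n)) sum_ww_aux subn1 -mulnn. Qed.

Lemma subset_sum (w : nat -> nat) : (w 0 <= 1)%N -> (forall i, w i.+1 <= (w i).+1)%N ->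
  forall N k, (k <= \sum_(0 <= i < N) w i)%N ->
  exists h : nat -> bool, (\sum_(0 <= i < N) h i * w i)%N = k.
Proof.
move=> w0 wS.
have wle : forall N, (w N <= (\sum_(0 <= i < N) w i).+1)%N.
  case=> [|N]; first by rewrite big_geq.
  by rewrite big_nat_recr //=; have := wS N; lia.
elim=> [|N IH] k.
  by rewrite big_geq // leqn0 => /eqP ->; exists (fun _ => false); rewrite big_geq.
rewrite big_nat_recr //= => hk.
case: (leqP k (\sum_(0 <= i < N) w i)) => hkS.
  have [h hh] := IH k hkS.
  exists (fun i => if i == N then false else h i).
  rewrite big_nat_recr //= eqxx mul0n addn0 -hh.
  by apply: eq_big_nat => i /andP[_ hi]; rewrite ltn_eqF.
have [h hh] := IH (k - w N) (ltac:(lia)).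
exists (fun i => if i == N then true else h i).
rewrite big_nat_recr //= eqxx mul1n.
rewrite (eq_big_nat _ _ (F2 := fun i => h i * w i)); last by move=> i /andP[_ hi]; rewrite ltn_eqF.
have := wle N; lia.
Qed.

Theorem proposition4p6 (K : fieldType) (charK0 : [pchar K]%R =i pred0) (n : nat) :
  quot_dim K n = ((n - 1) ^ 2 %/ 4 + 1)%N.
Proof.
rewrite addn1; apply: quot_dimN.
  by move=> d; rewrite ltnS -sum_ww; apply: io_le.
move=> k.
have hk : (k <= \sum_(0 <= i < n) ww n i)%N by rewrite big_mkord sum_ww -ltnS.
have [h hh] := subset_sum (w := ww n) (ltac:(by rewrite /ww min0n)) (ltac:(move=> i; rewrite /ww; lia)) hk.
by exists (MatA n h); rewrite io_MatA -hh big_mkord.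
Qed.
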